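(* If a perfect 2-D $(u\times v,4,2)$-OOC exists (equivalently, a strictly $v$-cyclic $SQS(u\times v)$), then $uv\equiv 2,4\pmod 6$ and $u(uv-1)(uv-2)\equiv 0\pmod{24}$. Equivalently, one of the following holds: (1) $u\equiv 1,5\pmod{12}$ and $v\equiv 2,10\pmod{24}$; (2) $u\equiv 7,11\pmod{12}$ and $v\equiv 14,22\pmod{24}$; (3) $u\equiv 2,4\pmod 6$ and $v\equiv 1,5\pmod 6$; (4) $u\equiv 4,8\pmod{12}$ and $v\equiv 2,4\pmod 6$.
   Context: A 2-D $(u\times v,4,2)$-OOC is a family $\mathcal C$ of $u\times v$ $(0,1)$-matrices of Hamming weight $4$ such that for all $A=(a_{ij}),B=(b_{ij})\in\mathcal C$ and every integer $r$ with $A\ne B$ or $r\not\equiv0\pmod v$, $\sum_{i,j}a_{ij}b_{i,j+r}\le 2$ (column indices mod $v$). It is perfect if, identifying each matrix with its support in $I_u\times Z_v$ ($I_u=\{0,\dots,u-1\}$), the supports of all $v$ cyclic column shifts of all codewords cover every $3$-subset of $I_u\times Z_v$ exactly once; equivalently its size is $u(uv-1)(uv-2)/24$. This is the same as a strictly $v$-cyclic Steiner quadruple system $SQS(u\times v)$ on $I_u\times Z_v$ (a set of $4$-subsets, closed under $(i,x)\mapsto(i,x+1)$, covering every $3$-subset exactly once, with each block having trivial stabilizer in $Z_v$). *)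

(* Defs.v *)
From mathcomp Require Import all_boot.
Set Implicit Arguments. Unset Strict Implicit. Unset Printing Implicit Defensive.

Lemma addmod_lt (v : nat) (j : 'I_v) (r : nat) : (j + r) %% v < v.
Proof. by apply: ltn_pmod; apply: leq_ltn_trans (ltn_ord j). Qed.

Definition zadd (v : nat) (j r : 'I_v) : 'I_v := Ordinal (addmod_lt j r).

(* A codeword of a 2-D (u x v,4,2)-OOC is identified with its support,
   a subset of I_u x Z_v. *)
Definition point (u v : nat) := ('I_u * 'I_v)%type.

Definition shiftset (u v : nat) (A : {set point u v}) (r : 'I_v) : {set point u v} :=
  [set (x.1, zadd x.2 r) | x in A].

(* correlation  sum_{i,j} a_{ij} b_{i,j+r} *)
Definition corr (u v : nat) (A B : {set point u v}) (r : 'I_v) : nat :=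
  #|[set x in A | (x.1, zadd x.2 r) \in B]|.

Definition is_OOC (u v : nat) (C : {set {set point u v}}) : Prop :=
  (forall A, A \in C -> #|A| = 4) /\
  (forall A B (r : 'I_v), A \in C -> B \in C ->
     (A != B) || (nat_of_ord r != 0) -> corr A B r <= 2).

Definition is_perfect_OOC (u v : nat) (C : {set {set point u v}}) : Prop :=
  is_OOC C /\
  forall T : {set point u v}, #|T| = 3 ->
    #|[set p : {set point u v} * 'I_v | (p.1 \in C) && (T \subset shiftset p.1 p.2)]| = 1.

(* Main.v *)
Require Import Defs.
From mathcomp Require Import all_boot.
Set Implicit Arguments. Unset Strict Implicit. Unset Printing Implicit Defensive.

Lemma zadd_inj v (r : 'I_v) : injective (fun j => zadd j r).
Proof.
move=> j k /(congr1 val) /= /eqP; rewrite eqn_modDr !modn_small // => /eqP.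
by move=> h; apply: val_inj.
Qed.

Lemma card_shift u v (A : {set point u v}) r : #|shiftset A r| = #|A|.
Proof.
rewrite card_imset // => [[i j] [i' j']] /= [-> h]; congr pair.
by apply: (@zadd_inj _ r); apply: val_inj.
Qed.

Lemma card_sumb (I : finType) (P : pred I) : #|[set p | P p]| = \sum_p (P p : nat).
Proof. by rewrite -sum1_card big_mkcond /=; apply: eq_bigr => p _; rewrite inE. Qed.

Lemma count_gen (T I : finType) (q : pred I) (b : I -> {set T}) (Y : {set T}) :
  \sum_(y in Y) #|[set p | q p && (y \in b p)]| = \sum_(p | q p) #|b p :&: Y|.
Proof.
under eq_bigr do rewrite card_sumb.
rewrite exchange_big /= [RHS]big_mkcond /=; apply: eq_bigr => p _.
case: (q p) => /=; last by rewrite big1.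
rewrite -sum1_card [RHS]big_mkcond [LHS]big_mkcond /=. apply: eq_bigr => y _.
by rewrite in_setI; case: (y \in b p); case: (y \in Y).
Qed.

Section Count.
Variables (u v : nat) (C : {set {set point u v}}).
Hypothesis hC : is_perfect_OOC C.
Definition bb (p : {set point u v} * 'I_v) := shiftset p.1 p.2.
Definition II (p : {set point u v} * 'I_v) := p.1 \in C.

Lemma cardbb p : II p -> #|bb p| = 4.
Proof. by move=> h; rewrite /bb card_shift; case: hC => [[h4 _] _]; apply: h4. Qed.

Lemma cardpt : #|{: point u v}| = u * v.
Proof. by rewrite card_prod !card_ord. Qed.

Lemma uniq3 x y z : x != y -> x != z -> y != z ->
  #|[set p | (II p && (x \in bb p) && (y \in bb p)) && (z \in bb p)]| = 1.
Proof.
move=> xy xz yz; case: hC => _ /(_ [set x; y; z]) h.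
have -> : [set p | (II p && (x \in bb p) && (y \in bb p)) && (z \in bb p)] =
   [set p : {set point u v} * 'I_v | (p.1 \in C) && ([set x; y; z] \subset shiftset p.1 p.2)].
  by apply/setP => p; rewrite !inE !subUset !sub1set /II /bb !andbA.
apply: h; rewrite -setUA cardsU1 cards2 yz !inE negb_or xy xz.
by [].
Qed.

Lemma pairc x y : x != y ->
  u * v - 2 = 2 * #|[set p | II p && (x \in bb p) && (y \in bb p)]|.
Proof.
move=> xy.
have := count_gen (fun p => II p && (x \in bb p) && (y \in bb p)) bb (~: [set x; y]).
rewrite (eq_bigr (fun _ => 1)); last first.
  move=> z; rewrite !inE negb_or => /andP [zx zy].
  by apply: uniq3 => //; rewrite eq_sym.
rewrite [X in _ = X -> _](eq_bigr (fun _ => 2)); last first.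
  move=> p /andP [/andP [Ip xp] yp].
  rewrite -setDE cardsD (cardbb Ip) (setIidPr _) ?cards2 ?xy //.
  by rewrite subUset !sub1set xp yp.
rewrite !sum_nat_const muln1 => h.
have : #|~: [set x; y]| = u * v - 2 by rewrite (cardsCs (~: _)) setCK cards2 xy cardpt.
rewrite h => <-; rewrite mulnC; congr (_ * _); by apply: eq_card => p; rewrite inE.
Qed.

Lemma pointc x :
  (u * v - 1) * (u * v - 2) = 6 * #|[set p | II p && (x \in bb p)]|.
Proof.
have := count_gen (fun p => II p && (x \in bb p)) bb (~: [set x]).
rewrite [X in _ = X -> _](eq_bigr (fun=> 3)); last first.
  move=> p /andP [Ip xp].
  by rewrite -setDE cardsD (cardbb Ip) (setIidPr _) ?cards1 // sub1set.
rewrite sum_nat_const => h.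
have h2 : 2 * \sum_(y in ~: [set x]) #|[set p | II p && (x \in bb p) && (y \in bb p)]|
   = (u * v - 1) * (u * v - 2).
  rewrite big_distrr /= (eq_bigr (fun=> u * v - 2)); last first.
    by move=> y; rewrite !inE => yx; rewrite (@pairc x y) // eq_sym.
  by rewrite sum_nat_const (cardsCs (~: _)) setCK cards1 cardpt.
rewrite -h2 h (mulnC _ 3) mulnA; congr (_ * _). by symmetry; apply: eq_card => p; rewrite inE.
Qed.

Lemma totalc : (u * v) * ((u * v - 1) * (u * v - 2)) = 24 * (#|C| * v).
Proof.
have := count_gen II bb setT.
rewrite [X in _ = X -> _](eq_bigr (fun=> 4)); last by move=> p Ip; rewrite setIT cardbb.
rewrite sum_nat_const => h.
have h2 : 6 * \sum_(y in setT) #|[set p | II p && (y \in bb p)]|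
   = (u * v) * ((u * v - 1) * (u * v - 2)).
  rewrite big_distrr /= (eq_bigr (fun=> (u * v - 1) * (u * v - 2))); last first.
    by move=> y _; rewrite (pointc y).
  by rewrite sum_nat_const cardsT cardpt.
rewrite -h2 h.
have -> : #|II| = #|C| * v.
  transitivity #|setX C [set: 'I_v]|; last by rewrite cardsX cardsT card_ord.
  by apply: eq_card => p; rewrite !inE andbT.
by rewrite (mulnC _ 4) mulnA.
Qed.
End Count.

Definition goalb (a b : nat) :=
  ((a * b) %% 6 \in [:: 2; 4]) &&
  [|| (a %% 12 \in [:: 1; 5]) && (b %% 24 \in [:: 2; 10]),
      (a %% 12 \in [:: 7; 11]) && (b %% 24 \in [:: 14; 22]),
      (a %% 6 \in [:: 2; 4]) && (b %% 6 \in [:: 1; 5])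
    | (a %% 12 \in [:: 4; 8]) && (b %% 6 \in [:: 2; 4])].

Definition hypb (a b : nat) :=
  let c := (a * b + 22) %% 24 in
  (2 %| c) ==> (6 %| (c + 1) * c) ==> (24 %| a * ((c + 1) * c %% 24)) ==> goalb a b.
Lemma check : all (fun a => all (fun b => hypb a b) (iota 0 24)) (iota 0 24).
Proof. vm_compute. exact: erefl. Qed.

Lemma dvd24 d x : d %| 24 -> (d %| x) = (d %| x %% 24).
Proof. by move=> h; rewrite /dvdn (modn_dvdm x h). Qed.

Lemma arith (u v m : nat) : m + 2 = u * v -> 2 %| m -> 6 %| (m + 1) * m ->
  24 %| u * (m + 1) * m ->
  ((u * v) %% 6 \in [:: 2; 4]) /\ (24 %| u * (u * v - 1) * (u * v - 2)) /\
  [\/ (u %% 12 \in [:: 1; 5]) /\ (v %% 24 \in [:: 2; 10]),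
      (u %% 12 \in [:: 7; 11]) /\ (v %% 24 \in [:: 14; 22]),
      (u %% 6 \in [:: 2; 4]) /\ (v %% 6 \in [:: 1; 5])
    | (u %% 12 \in [:: 4; 8]) /\ (v %% 6 \in [:: 2; 4])].
Proof.
move=> E h2 h6 h24.
have -> : u * v - 2 = m by rewrite -E addnK.
have -> : u * v - 1 = m + 1 by rewrite -E (addnBA m (isT : 1 <= 2)).
have hc : (u %% 24 * (v %% 24) + 22) %% 24 = m %% 24.
  by rewrite -modnDml modnMm -E modnDml -addnA modnDr.
have hm : (m %% 24 + 1) * (m %% 24) = (m + 1) * m %[mod 24].
  by rewrite -[LHS]modnMm modnDml modn_mod modnMm.
have /allP Hc := check.
have hu : u %% 24 \in iota 0 24 by rewrite mem_iota ltn_mod.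
have hv : v %% 24 \in iota 0 24 by rewrite mem_iota ltn_mod.
have /allP Hd := Hc _ hu.
have := Hd _ hv.
rewrite /hypb; cbv zeta; rewrite hc.
have e2 : 2 %| m %% 24 by rewrite -dvd24.
have e6 : 6 %| (m %% 24 + 1) * (m %% 24) by rewrite (@dvd24 6) // hm -dvd24.
have e24 : 24 %| u %% 24 * ((m %% 24 + 1) * (m %% 24) %% 24).
  by rewrite (@dvd24 24) // hm modnMm mulnA -dvd24.
rewrite e2 e6 e24 /= => /andP [g1 g2].
have m6 x : x %% 24 %% 6 = x %% 6 by apply: modn_dvdm.
have m12 x : x %% 24 %% 12 = x %% 12 by apply: modn_dvdm.
rewrite !m6 !m12 modn_mod in g2.
rewrite -modnMm !m6 modnMm in g1.
split => //; split => //.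
case/or4P: g2 => /andP [p q]; by [constructor 1 | constructor 2 | constructor 3 | constructor 4].
Qed.

Theorem lemma3p5 (u v : nat) (hu : 0 < u) (hv : 0 < v) (huv : 2 <= u * v)
  (C : {set {set point u v}}) (hC : is_perfect_OOC C) :
  ((u * v) %% 6 \in [:: 2; 4]) /\ (24 %| u * (u * v - 1) * (u * v - 2)) /\
  [\/ (u %% 12 \in [:: 1; 5]) /\ (v %% 24 \in [:: 2; 10]),
      (u %% 12 \in [:: 7; 11]) /\ (v %% 24 \in [:: 14; 22]),
      (u %% 6 \in [:: 2; 4]) /\ (v %% 6 \in [:: 1; 5])
    | (u %% 12 \in [:: 4; 8]) /\ (v %% 6 \in [:: 2; 4])].
Proof.
have : 1 < #|{: point u v}| by rewrite cardpt.
case/card_gt1P => x [y [_ _ xy]].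
have E : (u * v - 2) + 2 = u * v by rewrite subnK.
have E1 : u * v - 2 + 1 = u * v - 1.
  by rewrite addn1 -subSn.
apply: (arith E).
- by rewrite (pairc hC xy) dvdn_mulr.
- by rewrite E1 (pointc hC x) dvdn_mulr.
- rewrite E1 -mulnA.
  have := totalc hC; rewrite -mulnA (mulnC u) -mulnA [in RHS]mulnA (mulnC v) => h.
  move: h => /eqP; rewrite eqn_pmul2r // => /eqP h.
  by rewrite mulnC h dvdn_mulr.
Qed.
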